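(* Let $q$ be an odd prime power, $\omega$ a non-square in $\mathbb F_q$, $\epsilon\in\mathbb F_{q^2}$ with $\epsilon^2=\omega$, and write $z=z_1+\epsilon z_2$ ($z_i\in\mathbb F_q$) for $z\in\mathbb F_{q^2}$. Let $\mathcal C: aX^2+bXY+cXZ+dYZ+eZ^2=0$ be a non-singular conic of $\mathrm{PG}(2,q^2)$ with $b\ne0$ and $b_1d_2=b_2d_1$ (i.e. $d/b\in\mathbb F_q$), and assume $(b_1,d_1)\neq(0,0)$. Then the line of $\mathrm{PG}(2,q)$ with equation $b_1X+d_1Z=0$ is the tangent line to $\mathcal C$ at the point $(0:1:0)$; in particular it contains exactly $q$ points of $\mathrm{PG}(2,q)$ external to $\mathcal C$.
   Context: $\mathrm{PG}(2,q)$ is canonically embedded in $\mathrm{PG}(2,q^2)$. A point not on $\mathcal C$ is external if it lies on two tangent lines to $\mathcal C$. The condition $(b_1,d_1)\ne(0,0)$ is the implicit requirement that $b_1X+d_1Z=0$ define a line. *)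

(* Defs.v *)
From mathcomp Require Import all_boot all_order all_algebra all_field.
Set Implicit Arguments. Unset Strict Implicit. Unset Printing Implicit Defensive.
Import GRing.Theory.
Local Open Scope ring_scope.

Section PG2.
Variable K : finFieldType.

Definition pt := (K * K * K)%type.
Definition px (v : pt) : K := v.1.1.
Definition py (v : pt) : K := v.1.2.
Definition pz (v : pt) : K := v.2.

(* canonical representative of a projective point / line: first nonzero
   coordinate equal to 1 (this excludes the zero vector). *)
Definition normalized (v : pt) : bool :=
  if px v != 0 then px v == 1 else if py v != 0 then py v == 1 else pz v == 1.

(* the subfield F_q of K, for #|K| = q^2: fixed points of x |-> x^q *)
Definition inFq (q : nat) (x : K) : bool := x ^+ q == x.
Definition ptFq (q : nat) (v : pt) : bool :=
  [&& inFq q (px v), inFq q (py v) & inFq q (pz v)].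

Definition conicQ (a b c d e : K) (v : pt) : K :=
  a * px v ^+ 2 + b * px v * py v + c * px v * pz v + d * py v * pz v
  + e * pz v ^+ 2.
Definition on_conic a b c d e (v : pt) : bool := conicQ a b c d e v == 0.

Definition nonsingular_conic (a b c d e : K) : Prop :=
  ~ exists v : pt, [/\ v != (0, 0, 0), conicQ a b c d e v = 0,
     2%:R * a * px v + b * py v + c * pz v = 0,
     b * px v + d * pz v = 0 &
     c * px v + d * py v + 2%:R * e * pz v = 0].

Definition on_line (l v : pt) : bool :=
  px l * px v + py l * py v + pz l * pz v == 0.

Definition tangent_at a b c d e (l P : pt) : bool :=
  [&& l != (0, 0, 0), on_line l P, on_conic a b c d e P &
      [forall v : pt, (normalized v && on_line l v && on_conic a b c d e v)
                      ==> (v == P)]].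

Definition tangent_line a b c d e (l : pt) : bool :=
  [exists P : pt, normalized P && tangent_at a b c d e l P].

Definition external a b c d e (P : pt) : bool :=
  ~~ on_conic a b c d e P &&
  [exists l : pt, exists m : pt,
     [&& normalized l, normalized m, l != m,
         tangent_line a b c d e l, tangent_line a b c d e m,
         on_line l P & on_line m P]].
End PG2.

(* Main.v *)
Require Import Defs.
From mathcomp Require Import all_boot all_order all_algebra all_field.
From mathcomp Require Import zify ring.
Import GRing.Theory.
Local Open Scope ring_scope.
Set Implicit Arguments.
Unset Strict Implicit.

Lemma card_Fq (K : finFieldType) (q : nat) : (1 < q)%N -> #|K| = (q ^ 2)%N ->
  #|[set x : K | x ^+ q == x]| = q.
Proof.
move=> q1 hK.
set S := [set x : K | x ^+ q == x].
have up : (#|S| <= q)%N.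
  have hs : size ('X^q - 'X : {poly K}) = q.+1.
    by rewrite size_polyDl ?size_polyXn // size_polyN size_polyX.
  have := @max_poly_roots K ('X^q - 'X) (enum S).
  rewrite hs cardE; apply.
  - by rewrite -size_poly_eq0 hs.
  - apply/allP => x; rewrite mem_enum inE /root !hornerE subr_eq0 => //.
  - exact: enum_uniq.
pose g : {poly K} := 1 + \sum_(i < q) 'X^(q * (q.-1 - i) + i).
have hg x : x ^+ q != x -> root g x.
  move=> hx; rewrite /root /g !hornerE horner_sum.
  have e1 : x ^+ q ^+ q - x ^+ q = (x ^+ q - x) * \sum_(i < q) x ^+ (q * (q.-1 - i) + i).
    rewrite subrXX; congr (_ * _); apply: eq_bigr => i _.
    by rewrite exprD exprM.
  have e2 : x ^+ q ^+ q = x by rewrite -exprM mulnn -hK expf_card.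
  have : (x ^+ q - x) * (1 + \sum_(i < q) x ^+ (q * (q.-1 - i) + i)) = 0.
    by rewrite mulrDr mulr1 -e1 e2; ring.
  move/eqP; rewrite mulf_eq0 subr_eq0 (negbTE hx) /=.
  by move=> h; under eq_bigr do rewrite hornerXn.
have g0 : g != 0.
  apply/negP => /eqP g0; have : g.[0] = 0 by rewrite g0 horner0.
  rewrite /g !hornerE horner_sum big1 ?addr0; first by move/eqP; rewrite oner_eq0.
  move=> i _; rewrite hornerXn expr0n; case: i => i /= hi.
  have -> : (q * (q.-1 - i) + i == 0)%N = false by apply/eqP; nia.
  done.
have sg : (size g <= (q * q.-1).+1)%N.
  apply: leq_trans (size_polyD _ _) _; rewrite geq_max size_poly1 /=.
  apply: leq_trans (size_sum _ _ _) _.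
  apply/bigmax_leqP => i _; rewrite size_polyXn ltnS.
  case: i => i /= hi. nia.
have lo : (#|~: S| <= q * q.-1)%N.
  have := @max_poly_roots K g (enum (~: S)) g0.
  rewrite -cardE => h; rewrite -ltnS; apply: leq_trans (h _ _) sg.
  - apply/allP => x; rewrite mem_enum !inE; exact: hg.
  - exact: enum_uniq.
have := cardsC S; rewrite hK => hc.
nia.
Qed.

Section Geo.
Variables (K : finFieldType) (a b c d e : K).

Definition sc (k : K) (v : pt K) : pt K := (k * px v, k * py v, k * pz v).

Lemma normP (v : pt K) : normalized v ->
  [\/ px v = 1, px v = 0 /\ py v = 1 | [/\ px v = 0, py v = 0 & pz v = 1]].
Proof.
rewrite /normalized; case: eqP => hx /=; case: eqP => hy /=; move/eqP => h.
- by constructor 3.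
- by constructor 2.
- by constructor 1.
- by constructor 1.
Qed.

Lemma norm_prop (u v : pt K) k : normalized u -> normalized v -> v = sc k u -> v = u.
Proof.
case: u => [[x y] z]; case: v => [[x' y'] z'] nu nv.
rewrite /sc /px /py /pz /= => -[ex ey ez]; subst x' y' z'.
have := normP nu; have := normP nv; rewrite /px /py /pz /=.
case=> [h|[h1 h2]|[h1 h2 h3]]; case=> [g|[g1 g2]|[g1 g2 g3]]; subst;
  rewrite ?mulr1 ?mulr0 //.
all: try match goal with H : ?k * 1 = 1 |- _ => rewrite mulr1 in H; subst; by rewrite !mul1r end.
all: try match goal with H : ?k * 0 = 1 |- _ => by move: H; rewrite mulr0 => /eqP; rewrite eq_sym oner_eq0 end.
all: try match goal with H : ?k * 1 = 0 |- _ => rewrite mulr1 in H; subst; exfalso; match goal with H2 : 0 * _ = 1 |- _ => by move: H2; rewrite mul0r => /eqP; rewrite eq_sym oner_eq0 end end.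
all: match goal with H : ?k * 1 = 1 |- _ => move: H; rewrite mulr1 => ->; by rewrite ?mul1r end.
Qed.


Definition nrm (v : pt K) : pt K :=
  if px v != 0 then sc (px v)^-1 v else if py v != 0 then sc (py v)^-1 v
  else sc (pz v)^-1 v.

Lemma nrmP v : v != (0, 0, 0) -> normalized (nrm v) /\ exists2 k, k != 0 & nrm v = sc k v.
Proof.
case: v => [[x y] z] hv; rewrite /nrm /normalized /sc /px /py /pz /=.
have [hx|hx] := eqVneq x 0; have [hy|hy] := eqVneq y 0; rewrite /=.
- have hz0 : z != 0 by apply: contraNneq hv => e0; subst.
  subst; rewrite ?mulr0 ?eqxx /= ?mulVf ?eqxx //; split=> //; exists z^-1;
    by rewrite ?invr_eq0 ?mulr0 ?mulVf.
- subst; rewrite ?mulr0 ?eqxx /= ?mulVf ?oner_eq0 ?eqxx //; split=> //; exists y^-1;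
    by rewrite ?invr_eq0 ?mulr0 ?mulVf.
- rewrite ?mulVf ?oner_eq0 /= ?eqxx //; split=> //; exists x^-1;
    by rewrite ?invr_eq0 ?mulr0 ?mulVf.
- rewrite ?mulVf ?oner_eq0 /= ?eqxx //; split=> //; exists x^-1;
    by rewrite ?invr_eq0 ?mulr0 ?mulVf.
Qed.

Lemma on_line_scl k l v : k != 0 -> on_line (sc k l) v = on_line l v.
Proof.
move=> hk; rewrite /on_line /sc /px /py /pz /=.
rewrite -!mulrA -!mulrDr mulf_eq0 (negbTE hk) //.
Qed.

Lemma on_line_scr k l v : k != 0 -> on_line l (sc k v) = on_line l v.
Proof.
move=> hk; rewrite /on_line /sc /px /py /pz /=.
have -> : l.1.1 * (k * v.1.1) + l.1.2 * (k * v.1.2) + l.2 * (k * v.2) =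
  k * (l.1.1 * v.1.1 + l.1.2 * v.1.2 + l.2 * v.2) by ring.
by rewrite mulf_eq0 (negbTE hk).
Qed.

Notation Q := (conicQ a b c d e).

Lemma conic_sc k v : Q (sc k v) = k ^+ 2 * Q v.
Proof. rewrite /conicQ /sc /px /py /pz /=; ring. Qed.

Lemma sc_neq0 k v : k != 0 -> v != (0, 0, 0) -> sc k v != (0, 0, 0).
Proof.
case: v => [[x y] z] hk; apply: contraNneq; rewrite /sc /px /py /pz /= => -[].
by move=> /eqP; rewrite mulf_eq0 (negbTE hk) => /eqP -> /eqP; rewrite mulf_eq0 (negbTE hk)
  => /eqP -> /eqP; rewrite mulf_eq0 (negbTE hk) => /eqP ->.
Qed.

Definition grad (v : pt K) : pt K :=
  (2%:R * a * px v + b * py v + c * pz v, b * px v + d * pz v,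
   c * px v + d * py v + 2%:R * e * pz v).

Definition Bf (u v : pt K) : K :=
  px (grad u) * px v + py (grad u) * py v + pz (grad u) * pz v.

Lemma Bf_sym u v : Bf u v = Bf v u.
Proof. rewrite /Bf /grad /px /py /pz /=; ring. Qed.

Lemma Bf_self u : Bf u u = 2%:R * Q u.
Proof. rewrite /Bf /grad /conicQ /px /py /pz /=; ring. Qed.

Definition lc (s : K) (u : pt K) (t : K) (v : pt K) : pt K :=
  (s * px u + t * px v, s * py u + t * py v, s * pz u + t * pz v).

Lemma Q_lc s u t v : Q (lc s u t v) = s ^+ 2 * Q u + s * t * Bf u v + t ^+ 2 * Q v.
Proof. rewrite /lc /Bf /grad /conicQ /px /py /pz /=; ring. Qed.

Lemma Bf_lc w s u t v : Bf w (lc s u t v) = s * Bf w u + t * Bf w v.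
Proof. rewrite /lc /Bf /grad /px /py /pz /=; ring. Qed.


Lemma norm_neq0 (v : pt K) : normalized v -> v != (0, 0, 0).
Proof.
case: v => [[x y] z] /normP; rewrite /px /py /pz /=.
case=> [->|[-> ->]|[-> -> ->]]; apply/negP => /eqP; case.
- by move/eqP; rewrite oner_eq0.
- by move/eqP; rewrite oner_eq0.
- by move/eqP; rewrite oner_eq0.
Qed.

Lemma nosing (hC : nonsingular_conic a b c d e) (h2 : 2%:R != 0 :> K) v :
  v != (0, 0, 0) -> grad v = (0, 0, 0) -> False.
Proof.
move=> hv hg; apply: hC; exists v.
have := Bf_self v; rewrite /Bf hg /px /py /pz /= !mul0r !addr0 => /esym/eqP.
rewrite mulf_eq0 (negbTE h2) /= => /eqP hQ.
by move: hg; rewrite /grad => -[-> -> ->].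
Qed.

Lemma delta_neq0 (hC : nonsingular_conic a b c d e) (hb0 : b != 0) :
  a * d ^+ 2 - c * b * d + e * b ^+ 2 != 0.
Proof.
apply/eqP => hD; apply: hC.
exists (- d, 2%:R * a * d / b - c, b); rewrite /conicQ /px /py /pz /=; split.
- by apply/negP => /eqP [] _ _ /eqP; rewrite (negbTE hb0).
- by rewrite -hD; field.
- by field.
- by ring.
- have -> : c * - d + d * (2%:R * a * d / b - c) + 2%:R * e * b =
    2%:R / b * (a * d ^+ 2 - c * b * d + e * b ^+ 2) by field.
  by rewrite hD mulr0.
Qed.

Lemma L1 (hC : nonsingular_conic a b c d e) (hb0 : b != 0) u :
  Q u = 0 -> b * px u + d * pz u = 0 -> px u = 0 /\ pz u = 0.
Proof.
case: u => [[x y] z]; rewrite /conicQ /px /py /pz /= => hQ hl.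
have hx : x = - d * z / b by apply: (mulfI hb0); rewrite -[b * x](addrK (d * z)) hl; field.
subst x.
have : z ^+ 2 * (a * d ^+ 2 - c * b * d + e * b ^+ 2) = 0.
  by rewrite -(mulr0 (b ^+ 2)) -hQ; field.
move/eqP; rewrite mulf_eq0 (negbTE (delta_neq0 hC hb0)) orbF expf_eq0 /= => /eqP ->.
by split=> //; rewrite mulr0 mul0r.
Qed.


Lemma norm010 (u : pt K) : normalized u -> px u = 0 -> pz u = 0 -> u = (0, 1, 0).
Proof.
case: u => [[x y] z] /normP; rewrite /px /py /pz /= => + hx hz; subst.
case=> [/eqP|[_ ->]|[_ _ /eqP]] //; by rewrite eq_sym oner_eq0.
Qed.

Lemma lin_sol (s t x y : K) : t != 0 -> s * x + t * y = 0 -> y = - s / t * x.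
Proof.
move=> t0 h; apply: (mulfI t0); rewrite -[t * y](addKr (s * x)) h addr0; field.
by [].
Qed.

Arguments lin_sol {s t x y}.

Arguments norm010 {u}.

Lemma L2 (hC : nonsingular_conic a b c d e) (hb0 : b != 0) (P v : pt K) :
  normalized P -> normalized v -> Q P = 0 -> Q v = 0 -> Bf P v = 0 -> v = P.
Proof.
move=> nP nv hP hv hB.
pose s := b * px v + d * pz v; pose t := - (b * px P + d * pz P).
pose w := lc s P t v.
have hQw : Q w = 0 by rewrite Q_lc hP hv hB; ring.
have hlw : b * px w + d * pz w = 0 by rewrite /w /lc /px /pz /= /s /t; ring.
have [wx wz] := L1 hC hb0 hQw hlw.
have hPw : Bf P w = 0 by rewrite Bf_lc Bf_self hP hB; ring.
have hvw : Bf v w = 0 by rewrite Bf_lc (Bf_sym v P) hB Bf_self hv; ring.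
have e1 : Bf P w = - t * py w by rewrite /Bf wx wz /grad /t /px /py /pz /=; ring.
have e2 : Bf v w = s * py w by rewrite /Bf wx wz /grad /s /px /py /pz /=; ring.
have [s0|s0] := eqVneq s 0; have [t0|t0] := eqVneq t 0.
- have [Px Pz] : px P = 0 /\ pz P = 0.
    by apply: L1 => //; apply/eqP; rewrite -oppr_eq0; apply/eqP.
  have [vx vz] := L1 hC hb0 hv s0.
  by rewrite (norm010 nP) // (norm010 nv).
all: have wy : py w = 0.
all: try (by move: hPw; rewrite e1 => /eqP; rewrite mulf_eq0 oppr_eq0 (negbTE t0) => /eqP).
all: try (by move: hvw; rewrite e2 => /eqP; rewrite mulf_eq0 (negbTE s0) => /eqP).
all: move: wx wy wz; rewrite /w /lc /px /py /pz /= => wx wy wz.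
all: try by apply: (@norm_prop _ _ (- s / t)) => //; rewrite /sc /px /py /pz
   -(lin_sol t0 wx) -(lin_sol t0 wy) -(lin_sol t0 wz) -!surjective_pairing.
all: exfalso; move: wx wy wz; rewrite t0 !mul0r !addr0 => /eqP; rewrite mulf_eq0 (negbTE s0) => /eqP Px;
   move=> /eqP; rewrite mulf_eq0 (negbTE s0) => /eqP Py /eqP; rewrite mulf_eq0 (negbTE s0) => /eqP Pz;
   move: (norm_neq0 nP); rewrite [P]surjective_pairing [P.1]surjective_pairing Px Py Pz eqxx //.
Qed.


Lemma tangent_grad (hC : nonsingular_conic a b c d e) (hb0 : b != 0) (h2 : 2%:R != 0 :> K)
  (P : pt K) : normalized P -> Q P = 0 -> tangent_at a b c d e (nrm (grad P)) P.
Proof.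
move=> nP hP.
have g0 : grad P != (0, 0, 0).
  by apply/negP => /eqP hg; exact: (nosing hC h2 (norm_neq0 nP) hg).
have [nl [k k0 ek]] := nrmP g0.
apply/and4P; split.
- exact: norm_neq0.
- rewrite ek on_line_scl //; change (Bf P P == 0); by rewrite Bf_self hP mulr0.
- by rewrite /on_conic hP.
- apply/forallP => v; apply/implyP => /andP [/andP [nv hl] hv].
  rewrite ek on_line_scl // in hl.
  by apply/eqP; apply: (L2 hC hb0 nP nv hP (eqP hv) (eqP hl)).
Qed.


Lemma tangent_uniq l P v : tangent_at a b c d e l P -> normalized v -> on_line l v ->
  on_conic a b c d e v -> v = P.
Proof.
case/and4P => _ _ _ /forallP /(_ v) h nv hl hv; apply/eqP; move: h.
by rewrite nv hl hv.
Qed.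

Arguments tangent_uniq {l P v}.

Lemma Bf_sc u k v : Bf u (sc k v) = k * Bf u v.
Proof. rewrite /Bf /sc /px /py /pz /=; ring. Qed.

Definition P0 : pt K := (0, 1, 0).

Lemma nP0 : normalized P0.
Proof. by rewrite /normalized /P0 /px /py /pz /= eqxx oner_eq0 /= eqxx. Qed.

Lemma QP0 : Q P0 = 0.
Proof. rewrite /conicQ /P0 /px /py /pz /=; ring. Qed.

Lemma tangent_P0 (hC : nonsingular_conic a b c d e) (hb0 : b != 0) (l0 : pt K) :
  l0 != (0, 0, 0) -> (forall v, on_line l0 v = (Bf P0 v == 0)) ->
  tangent_at a b c d e l0 P0.
Proof.
move=> nz hl0; apply/and4P; split => //.
- by rewrite hl0 Bf_self QP0 mulr0.
- by rewrite /on_conic QP0.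
- apply/forallP => v; apply/implyP => /andP [/andP [nv hl] hv].
  rewrite hl0 in hl.
  by apply/eqP; apply: (L2 hC hb0 nP0 nv QP0 (eqP hv) (eqP hl)).
Qed.

Lemma tangent_sc l P k : k != 0 -> tangent_at a b c d e l P -> tangent_at a b c d e (sc k l) P.
Proof.
move=> k0 /and4P [nz hl hc /forallP hf]; apply/and4P; split => //.
- exact: sc_neq0.
- by rewrite on_line_scl.
- by apply/forallP => v; rewrite on_line_scl.
Qed.

Lemma ext_of (hC : nonsingular_conic a b c d e) (hb0 : b != 0) (h2 : 2%:R != 0 :> K)
  (l0 : pt K) : l0 != (0, 0, 0) -> (forall v, on_line l0 v = (Bf P0 v == 0)) ->
  forall R, normalized R -> on_line l0 R -> R != P0 -> external a b c d e R.
Proof.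
move=> nz hl0 R nR hlR nRP.
have T0 := tangent_P0 hC hb0 nz hl0.
have notC : ~~ on_conic a b c d e R.
  by apply/negP => hc; move/eqP: nRP; apply; apply: (tangent_uniq T0).
rewrite /external notC /=.
have [nl [k k0 ek]] := nrmP nz.
have Tl : tangent_at a b c d e (nrm l0) P0 by rewrite ek; apply: tangent_sc.
have hR : b * px R + d * pz R = 0.
  move: hlR; rewrite hl0 /Bf /grad /P0 /px /py /pz /= => /eqP <-; ring.
pose x := px R; pose y := py R; pose z := pz R.
pose al := 2%:R * a * x + b * y + c * z.
pose ga := c * x + d * y + 2%:R * e * z.
have hxz : (x, z) != (0, 0).
  apply/negP => /eqP [hx hz]; move/eqP: nRP; apply; exact: norm010.
have hD : d * al - b * ga != 0.
  apply/negP => /eqP hD.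
  apply: (@nosing hC h2 (x, y - al / b, z)).
    by move: hxz; apply: contraNneq => -[-> _ ->].
  rewrite /grad /px /py /pz /=; congr (_, _, _).
  - by rewrite /al; field.
  - exact: hR.
  - have -> : c * x + d * (y - al / b) + 2%:R * e * z = - (d * al - b * ga) / b.
      by rewrite /al /ga; field.
    by rewrite hD oppr0 mul0r.
pose w := - (a * ga ^+ 2 - c * al * ga + e * al ^+ 2) / (d * al - b * ga).
pose P1 : pt K := (- ga, w, al).
have P1nz : P1 != (0, 0, 0).
  apply/negP => /eqP [hg _ ha]; move: hD; rewrite ha.
  by move/eqP: hg; rewrite oppr_eq0 => /eqP ->; rewrite !mulr0 subrr eqxx.
have QP1 : Q P1 = 0.
  rewrite /conicQ /P1 /px /py /pz /= /w.
  by field.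
have BRP1 : Bf R P1 = 0.
  have -> : Bf R P1 = (b * px R + d * pz R) * w.
    by rewrite /Bf /grad /P1 /px /py /pz /= -/x -/y -/z -/al -/ga; ring.
  by rewrite hR mul0r.
have [nP2 [k2 k20 ek2]] := nrmP P1nz.
pose P2 := nrm P1.
have QP2 : Q P2 = 0 by rewrite /P2 ek2 conic_sc QP1 mulr0.
have Tm := tangent_grad hC hb0 h2 nP2 QP2.
apply/existsP; exists (nrm l0); apply/existsP; exists (nrm (grad P2)).
have [nm _] : normalized (nrm (grad P2)) /\ True.
  split => //; case/and4P: Tm => nzm _ _ _.
  have g0 : grad P2 != (0, 0, 0).
    by apply/negP => /eqP hg; exact: (nosing hC h2 (norm_neq0 nP2) hg).
  by case: (nrmP g0).
have g0 : grad P2 != (0, 0, 0).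
  by apply/negP => /eqP hg; exact: (nosing hC h2 (norm_neq0 nP2) hg).
have [_ [k3 k30 ek3]] := nrmP g0.
rewrite nl nm /=.
apply/and5P; split => //.
- apply/negP => /eqP elm.
  have : P0 = P2.
    apply: (tangent_uniq Tm nP0); last by rewrite /on_conic QP0.
    by rewrite -elm; case/and4P: Tl.
  rewrite /P2 ek2 /sc /P1 /P0 /px /py /pz /= => -[h1 _ h3].
  move: hD; move/esym/eqP: h1; rewrite mulf_eq0 (negbTE k20) oppr_eq0 => /eqP ->.
  by move/esym/eqP: h3; rewrite mulf_eq0 (negbTE k20) /= => /eqP ->; rewrite !mulr0 subrr eqxx.
- by apply/existsP; exists P0; rewrite nP0.
- by apply/existsP; exists P2; rewrite nP2.
- by rewrite ek on_line_scl // -ek.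
- rewrite ek3 on_line_scl //; change (Bf P2 R == 0).
  by rewrite Bf_sym /P2 ek2 Bf_sc BRP1 mulr0.
Qed.

End Geo.

Lemma inFq0 (K : finFieldType) q : (0 < q)%N -> inFq q (0 : K).
Proof. by move=> q0; rewrite /inFq expr0n; case: q q0. Qed.
Lemma inFq1 (K : finFieldType) q : inFq q (1 : K).
Proof. by rewrite /inFq expr1n. Qed.
Lemma inFqM (K : finFieldType) q (x y : K) : inFq q x -> inFq q y -> inFq q (x * y).
Proof. by rewrite /inFq exprMn => /eqP -> /eqP ->. Qed.
Lemma inFqV (K : finFieldType) q (x : K) : inFq q x -> inFq q x^-1.
Proof. by rewrite /inFq exprVn => /eqP ->. Qed.
Lemma inFqN (K : finFieldType) q (x : K) : odd q -> inFq q x -> inFq q (- x).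
Proof. by move=> oq; rewrite /inFq exprNn -signr_odd oq expr1 mulN1r => /eqP ->. Qed.

Unset Implicit Arguments.

Theorem mainTheorem11 (K : finFieldType) (q : nat)
  (hq : exists p n : nat, [/\ prime p, (0 < n)%N & q = (p ^ n)%N])
  (hodd : odd q) (hK : #|K| = (q ^ 2)%N)
  (omega eps : K) (homega : inFq q omega)
  (hns : ~ exists y : K, inFq q y /\ y ^+ 2 = omega)
  (heps : eps ^+ 2 = omega)
  (a b c d e b1 b2 d1 d2 : K)
  (hb1 : inFq q b1) (hb2 : inFq q b2) (hd1 : inFq q d1) (hd2 : inFq q d2)
  (hb : b = b1 + eps * b2) (hd : d = d1 + eps * d2)
  (hC : nonsingular_conic a b c d e)
  (hb0 : b != 0) (hbd : b1 * d2 = b2 * d1)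
  (hbd1 : (b1, d1) != (0, 0)) :
  tangent_at a b c d e (b1, 0, d1) (0, 1, 0) /\
  #|[set P : pt K | [&& normalized P, ptFq q P, on_line (b1, 0, d1) P &
                        external a b c d e P]]| = q.
Proof.
have [p [n [pp n0 qe]]] := hq.
have q1 : (1 < q)%N by rewrite qe -(expn0 p) ltn_exp2l ?prime_gt1.
have hp : p \in [pchar K].
  by apply: (@card_finPcharP _ p (n * 2)) => //; rewrite hK qe -expnM.
have h2 : 2%:R != 0 :> K.
  apply/negP => h2; have := dvdn_pcharf hp 2; rewrite h2 dvdn_prime2 // => /eqP p2.
  by move: hodd; rewrite qe p2 oddX /= orbF => /eqP n00; rewrite n00 in n0.
have hbd' : b * d1 = d * b1.
  apply/eqP; rewrite -subr_eq0.
  have -> : b * d1 - d * b1 = eps * (b2 * d1 - d2 * b1) by rewrite hb hd; ring.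
  by rewrite -hbd [d2 * b1]mulrC subrr mulr0.
have b10 : b1 != 0.
  apply/negP => /eqP b10.
  have d10 : d1 != 0 by move: hbd1; rewrite b10; apply: contraNneq => ->.
  move: hbd'; rewrite b10 mulr0 => /eqP; rewrite mulf_eq0 (negbTE hb0) (negbTE d10) //.
pose l0 : pt K := (b1, 0, d1).
have l0nz : l0 != (0, 0, 0) by apply/negP => /eqP [] /eqP; rewrite (negbTE b10).
have hl0 v : on_line l0 v = (Bf a b c d e (P0 K) v == 0).
  have -> : Bf a b c d e (P0 K) v = b / b1 * (b1 * px v + 0 * py v + d1 * pz v).
    have hd' : d = b * d1 / b1 by rewrite hbd' mulfK.
    rewrite /Bf /grad /P0 /px /py /pz /= hd'; field.
    by [].
  by rewrite mulf_eq0 mulf_eq0 invr_eq0 (negbTE hb0) (negbTE b10).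
have T0 := tangent_P0 hC hb0 l0nz hl0.
split; first exact: T0.
have hS : [set P : pt K | [&& normalized P, ptFq q P, on_line (b1, 0, d1) P &
                        external a b c d e P]] =
          [set P : pt K | [&& normalized P, ptFq q P, on_line (b1, 0, d1) P &
                        P != (0, 1, 0)]].
  apply/setP => R; rewrite !inE.
  case nR: (normalized R); case fR: (ptFq q R); case lR : (on_line _ R) => //=.
  apply/idP/idP.
  + move=> /andP [nc _]; apply: contraNneq nc => ->.
    by rewrite /on_conic (QP0 a b c d e).
  + exact: (ext_of hC hb0 h2 l0nz hl0 nR lR).
rewrite hS.
have FqC := card_Fq q1 hK.
have q0 : (0 < q)%N by apply: ltnW.
have [d10|d10] := eqVneq d1 0.
- pose f (z : K) : pt K := if z == 0 then (0, 0, 1) else (0, 1, z).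
  have finj : injective f.
    move=> z1 z2; rewrite /f.
    case: (eqVneq z1 0) => [->|h1]; case: (eqVneq z2 0) => [->|h3] //.
    + by move/(congr1 (fun v : pt K => v.1.2)) => /= /eqP; rewrite eq_sym oner_eq0.
    + by move/(congr1 (fun v : pt K => v.1.2)) => /= /eqP; rewrite oner_eq0.
    + by case.
  rewrite -[RHS]FqC -(card_imset _ finj); apply: eq_card => -[[x y] z]; rewrite inE.
  apply/idP/imsetP.
  + case/and4P => nR fR lR nRP.
    move: lR; rewrite /on_line /px /py /pz /= d10 mul0r mul0r !addr0 mulf_eq0 (negbTE b10) /= => /eqP x0.
    subst x.
    move: fR; rewrite /ptFq /px /py /pz /= => /and3P [_ fy fz].
    have := normP nR; rewrite /px /py /pz /=.
    case=> [/eqP|[_ y1]|[_ y0 z1]]; first by rewrite eq_sym oner_eq0.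
    * subst y; exists z; first by rewrite inE.
      rewrite /f; case: eqP => // z0; subst z; by rewrite eqxx in nRP.
    * subst; exists 0; first by rewrite inE; apply: inFq0.
      by rewrite /f eqxx.
  + case=> z0 hz0 ->; rewrite inE in hz0.
    rewrite /f; case: eqP => [_|/eqP hz].
    * apply/and4P; split.
      - by rewrite /normalized /px /py /pz /= !eqxx.
      - by rewrite /ptFq /px /py /pz /= inFq0 // inFq1.
      - by rewrite /on_line /px /py /pz /= d10; apply/eqP; ring.
      - by apply/eqP => -[] /eqP; rewrite eq_sym oner_eq0.
    * apply/and4P; split.
      - by rewrite /normalized /px /py /pz /= eqxx oner_eq0 /= eqxx.
      - by rewrite /ptFq /px /py /pz /= inFq0 // inFq1.
      - by rewrite /on_line /px /py /pz /= d10; apply/eqP; ring.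
      - by apply/eqP => -[] hz'; rewrite hz' eqxx in hz.
- pose f (y : K) : pt K := (1, y, - b1 / d1).
  have finj : injective f by move=> y1 y2 [].
  rewrite -[RHS]FqC -(card_imset _ finj); apply: eq_card => -[[x y] z]; rewrite inE.
  apply/idP/imsetP.
  + case/and4P => nR fR lR nRP.
    move: fR; rewrite /ptFq /px /py /pz /= => /and3P [_ fy _].
    move: lR; rewrite /on_line /px /py /pz /= mul0r addr0 => /eqP lR.
    have := normP nR; rewrite /px /py /pz /=.
    case=> [x1|[x0 _]|[x0 _ _]].
    * subst x; exists y; first by rewrite inE.
      rewrite mulr1 in lR; rewrite /f; congr (_, _, _); apply/esym; apply: (mulfI d10).
      by rewrite -[d1 * z](addKr b1) lR addr0; field.
    * subst x; move: lR; rewrite mulr0 add0r => /eqP; rewrite mulf_eq0 (negbTE d10) /= => /eqP z0.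
      by subst; move: nRP; rewrite (norm010 nR) ?eqxx.
    * subst x; move: lR; rewrite mulr0 add0r => /eqP; rewrite mulf_eq0 (negbTE d10) /= => /eqP z0.
      by subst; move: nRP; rewrite (norm010 nR) ?eqxx.
  + case=> y0 hy0 ->; rewrite inE in hy0.
    apply/and4P; split.
    - by rewrite /f /normalized /px /py /pz /= oner_eq0 /= eqxx.
    - rewrite /f /ptFq /px /py /pz /= inFq1 /=; apply/andP; split; first exact: hy0.
      exact: (inFqM (inFqN hodd hb1) (inFqV hd1)).
    - by rewrite /f /on_line /px /py /pz /=; apply/eqP; field.
    - by apply/eqP => -[] /eqP; rewrite oner_eq0.
Qed.
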